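(* Let $\lambda\in\mathbb R$ and $G_\lambda(x)=\frac{x^3}{8} - \frac{\lambda x^2}{2} + \frac{\lambda^2 x}{2}$. For $a\ge 1\vee 3\lambda$ and any constant $r\ge 0$, \[\int_a^\infty y^{r} e^{-G_\lambda(y)}\, dy = \frac{a^{r}}{G_\lambda'(a)}e^{-G_\lambda(a)}\Big(1 + O\big(\tfrac{1}{a^3}\big)\Big),\] where the implied constant depends only on $r$.
   Context: $G'_\lambda$ is the derivative of $G_\lambda$; $x\vee y=\max(x,y)$. $f=g(1+O(h))$ means $|f-g|\le C|g|h$. *)

(* Defs.v *)
From Stdlib Require Import Reals.
From Coquelicot Require Import Coquelicot.
Open Scope R_scope.

Definition G (lam x : R) : R := x ^ 3 / 8 - lam * x ^ 2 / 2 + lam ^ 2 * x / 2.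

Definition integrand (lam r y : R) : R := Rpower y r * exp (- G lam y).

Definition main_term (lam r a : R) : R :=
  Rpower a r / Derive (G lam) a * exp (- G lam a).

(* Main.v *)
Require Import Defs.
From Stdlib Require Import Reals Lra Psatz.
From Coquelicot Require Import Coquelicot.
Open Scope R_scope.

Definition d (lam y : R) := 3*y^2/8 - lam*y + lam^2/2.
Definition dd (lam y : R) := 3*y/4 - lam.

Lemma d_lb lam y : 1 <= y -> 3*lam <= y -> 7*y^2/72 <= d lam y.
Proof.
  intros H1 H2. unfold d.
  destruct (Rle_or_lt 0 lam).
  - nra.
  - nra.
Qed.

Lemma dd_nonneg lam y : 1 <= y -> 3*lam <= y -> 0 <= dd lam y.
Proof. unfold dd; intros; lra. Qed.

Lemma dd_bound lam y : 1 <= y -> 3*lam <= y -> y^3 * dd lam y <= 144 * (d lam y)^2.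
Proof.
  intros H1 H2.
  assert (Hd : d lam y = 3/8*(y - 2*lam)*(y - 2*lam/3)) by (unfold d; field).
  assert (Hdd : dd lam y = 3/8*((y - 2*lam)+(y - 2*lam/3))) by (unfold dd; field).
  rewrite Hd, Hdd.
  set (u := y - 2*lam). set (v := y - 2*lam/3).
  assert (Hu : y/3 <= u) by (unfold u; destruct (Rle_or_lt 0 lam); lra).
  assert (Hv : y/3 <= v) by (unfold v; destruct (Rle_or_lt 0 lam); lra).
  assert (Huv1 : y^2/9 <= u*v) by nra.
  assert (Huv2 : y*(u+v)/6 <= u*v) by nra.
  assert (0 <= u+v) by lra.
  assert (y^3*(u+v)/54 <= (u*v)^2).
  { assert (y^2/9 * (y*(u+v)/6) <= (u*v)*(u*v)). { apply Rmult_le_compat; nra. } nra. }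
  nra.
Qed.

Lemma G_expand lam a t : 0 < a -> 3*lam <= a -> 0 <= t ->
  G lam a + d lam a * t + t^3/8 <= G lam (a+t).
Proof.
  intros. unfold G, d.
  assert (0 <= (3*a/4 - lam)*t^2/2) by (apply Rmult_le_pos; [|lra]; apply Rmult_le_pos; nra).
  nra.
Qed.

Lemma poly_bound r t : 0 <= r -> 0 <= t -> r*t - t^3/8 <= 3*(r+1)^2.
Proof.
  intros Hr Ht. destruct (Rle_or_lt t (3*(r+1))).
  - assert (r*t <= r*(3*(r+1))) by (apply Rmult_le_compat_l; lra). nra.
  - assert (9*(r+1)^2 <= t^2) by nra.
    assert (r * t <= t^3/8) by nra. nra.
Qed.

Lemma ln_bound a y : 1 <= a -> a <= y -> ln y <= ln a + (y - a).
Proof.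
  intros. 
  assert (y <= a * exp (y - a)).
  { pose proof (exp_ineq1_le (y-a)). nra. }
  rewrite <- (ln_exp (y-a)), <- ln_mult by (try lra; apply exp_pos).
  apply ln_le; lra.
Qed.
Definition q (lam r y : R) := r/(y*d lam y) - dd lam y/(d lam y)^2.
Definition phi (lam r y : R) := Rpower y r / d lam y * exp (- G lam y).

Lemma G_deriv lam y : is_derive (G lam) y (d lam y).
Proof. unfold G, d. auto_derive; auto. field. Qed.

Lemma phi_deriv lam r y : 0 < y -> 0 < d lam y ->
  is_derive (phi lam r) y (integrand lam r y * (q lam r y - 1)).
Proof.
  intros Hy Hd. unfold phi, integrand, q, Rpower, d, dd in *.
  auto_derive.
  - repeat split; try lra. exists (d lam y). apply G_deriv.
  - replace (Derive (fun x => G lam x) y) with (d lam y)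
      by (symmetry; apply is_derive_unique; apply G_deriv).
    unfold d. field. lra.
Qed.

Lemma h_cont lam r y : 0 < y -> continuous (integrand lam r) y.
Proof.
  intros Hy. apply (ex_derive_continuous (K:=R_AbsRing) (V:=R_NormedModule)). unfold integrand, Rpower, G.
  auto_derive. auto.
Qed.

Lemma div_le a b c e : 0 < b -> 0 < e -> a*e <= c*b -> a/b <= c/e.
Proof.
  intros Hb He H. apply Rmult_le_reg_r with (b*e). nra.
  replace (a/b*(b*e)) with (a*e) by (field; lra).
  replace (c/e*(b*e)) with (c*b) by (field; lra). exact H.
Qed.

Lemma q_bound lam r y a : 0 <= r -> 1 <= a -> a <= y -> 3*lam <= a ->
  Rabs (q lam r y) <= (11*r+144)/a^3.
Proof.
  intros Hr Ha Hy Hl.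
  assert (HD := d_lb lam y ltac:(lra) ltac:(lra)).
  assert (Hdd := dd_nonneg lam y ltac:(lra) ltac:(lra)).
  assert (Hb := dd_bound lam y ltac:(lra) ltac:(lra)).
  unfold q. set (D := d lam y) in *. set (E := dd lam y) in *.
  assert (HDp : 0 < D) by nra.
  assert (Hy3 : 0 < y^3) by (apply pow_lt; lra).
  assert (H1 : r/(y*D) <= 11*r/y^3).
  { apply div_le; try nra. assert (y * D >= 7*y^3/72) by nra. nra. }
  assert (H2 : E/D^2 <= 144/y^3).
  { apply div_le; nra. }
  assert (H3 : 0 <= r/(y*D)) by (apply Rmult_le_pos; [lra| left; apply Rinv_0_lt_compat; nra]).
  assert (H4 : 0 <= E/D^2) by (apply Rmult_le_pos; [lra| left; apply Rinv_0_lt_compat; nra]).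
  assert (H5 : (11*r+144)/y^3 <= (11*r+144)/a^3).
  { apply div_le. apply pow_lt; lra. apply pow_lt; lra.
    apply Rmult_le_compat_l. lra. apply pow_incr. lra. }
  assert (H6 : (11*r+144)/y^3 = 11*r/y^3 + 144/y^3) by (field; lra).
  apply Rabs_le. lra.
Qed.

Lemma exp_le x y : x <= y -> exp x <= exp y.
Proof. intros [H|H]; [left; apply exp_increasing; auto| subst; lra]. Qed.

Lemma h_bound lam r a y : 0 <= r -> 1 <= a -> a <= y -> 3*lam <= a ->
  integrand lam r y <= exp (3*(r+1)^2) * (Rpower a r * exp (- G lam a)) * exp (- d lam a * (y - a)).
Proof.
  intros Hr Ha Hy Hl. unfold integrand, Rpower.
  rewrite <- exp_plus.
  replace (exp (3*(r+1)^2) * (exp (r * ln a) * exp (- G lam a)) * exp (- d lam a * (y - a)))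
    with (exp (3*(r+1)^2 + r * ln a + - G lam a + - d lam a * (y - a)))
    by (rewrite !exp_plus; ring).
  apply exp_le.
  assert (H1 := ln_bound a y Ha Hy).
  assert (H2 := G_expand lam a (y-a) ltac:(lra) Hl ltac:(lra)).
  replace (a + (y-a)) with y in H2 by ring.
  assert (H3 := poly_bound r (y-a) Hr ltac:(lra)).
  assert (r * ln y <= r * (ln a + (y-a))) by (apply Rmult_le_compat_l; lra).
  nra.
Qed.

Lemma mono (W W' : R -> R) a b : a <= b ->
  (forall x, a <= x <= b -> is_derive W x (W' x)) ->
  (forall x, a <= x <= b -> W' x <= 0) -> W b <= W a.
Proof.
  intros Hab Hd Hn.
  destruct (MVT_gen W a b W') as [c [Hc Heq]].
  - intros x Hx. rewrite Rmin_left, Rmax_right in Hx by lra. apply Hd; lra.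
  - intros x Hx. rewrite Rmin_left, Rmax_right in Hx by lra.
    apply continuity_pt_filterlim.
    apply (ex_derive_continuous (K:=R_AbsRing) (V:=R_NormedModule)).
    exists (W' x). apply Hd; lra.
  - rewrite Rmin_left, Rmax_right in Hc by lra.
    assert (W' c * (b - a) <= 0).
    { assert (W' c <= 0) by (apply Hn; lra). nra. }
    lra.
Qed.

Lemma F_deriv (h : R -> R) a y : 0 < a -> 0 < y -> (forall z, 0 < z -> continuous h z) ->
  is_derive (RInt h a) y (h y).
Proof.
  intros Ha Hy Hc. apply (is_derive_RInt h (RInt h a) a).
  - assert (Hy2 : 0 < y/2) by lra.
    exists (mkposreal _ Hy2). intros z Hz.
    change (Rabs (z - y) < y/2) in Hz. apply Rabs_def2 in Hz.
    apply (RInt_correct (V:=R_CompleteNormedModule)). apply (ex_RInt_continuous (V:=R_CompleteNormedModule)).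
    intros w Hw. apply Hc.
    assert (0 < Rmin a z) by (apply Rmin_glb_lt; lra). lra.
  - apply Hc; lra.
Qed.

Lemma le_eps x y : (forall eps, 0 < eps -> x <= y + eps) -> x <= y.
Proof.
  intros H. destruct (Rle_or_lt x y) as [|H']; auto.
  assert (H2 := H ((x-y)/2) ltac:(lra)). lra.
Qed.

Lemma lub_approx (F : R -> R) a I eps : 0 < eps ->
  is_lub (fun x => exists b, a <= b /\ x = F b) I ->
  exists b, a <= b /\ I - eps < F b.
Proof.
  intros He [Hub Hl].
  destruct (Classical_Prop.classic (exists b, a <= b /\ I - eps < F b)) as [H|H]; auto.
  exfalso. assert (I <= I - eps); [|lra].
  apply Hl. intros x [b [Hb ->]].
  destruct (Rle_or_lt (F b) (I - eps)) as [|H']; auto.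
  exfalso; apply H; exists b; auto.
Qed.

Lemma gen_of_lub (h : R -> R) a I :
  (forall b, a <= b -> ex_RInt h a b) ->
  (forall b1 b2, a <= b1 -> b1 <= b2 -> RInt h a b1 <= RInt h a b2) ->
  is_lub (fun x => exists b, a <= b /\ x = RInt h a b) I ->
  is_RInt_gen h (at_point a) (Rbar_locally p_infty) I.
Proof.
  intros Hex Hmon Hlub P [eps HP].
  destruct (lub_approx (RInt h a) a I eps (cond_pos eps) Hlub) as [b0 [Hb0 Hb0']].
  apply Filter_prod with (fun x => x = a) (fun y => b0 < y).
  - reflexivity.
  - exists b0. auto.
  - intros x y -> Hy. exists (RInt h a y). split.
    + apply (RInt_correct (V:=R_CompleteNormedModule)), Hex. lra.
    + apply HP. change (Rabs (RInt h a y - I) < eps).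
      destruct Hlub as [Hub _].
      assert (RInt h a y <= I) by (apply Hub; exists y; split; [lra|auto]).
      assert (RInt h a b0 <= RInt h a y) by (apply Hmon; lra).
      apply Rabs_def1; lra.
Qed.

Lemma h_nonneg lam r y : 0 <= integrand lam r y.
Proof. unfold integrand, Rpower. left. apply Rmult_lt_0_compat; apply exp_pos. Qed.

Theorem lemma5p2 :
  forall r : R, 0 <= r ->
  exists C : R, forall lam a : R, Rmax 1 (3 * lam) <= a ->
    exists I : R,
      is_RInt_gen (integrand lam r) (at_point a) (Rbar_locally p_infty) I /\
      Rabs (I - main_term lam r a) <= C * Rabs (main_term lam r a) * / a ^ 3.
Proof.
  intros r Hr. exists ((11*r+144) * exp (3*(r+1)^2)). intros lam a Hmax.
  assert (Ha : 1 <= a) by (eapply Rle_trans; [apply Rmax_l | exact Hmax]).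
  assert (Hl : 3*lam <= a) by (eapply Rle_trans; [apply Rmax_r | exact Hmax]).
  set (h := integrand lam r).
  set (K := (11*r+144)/a^3).
  set (B := exp (3*(r+1)^2)).
  set (g := d lam a).
  assert (Hg : 0 < g) by (unfold g; assert (H := d_lb lam a Ha Hl); nra).
  set (Pa := Rpower a r * exp (- G lam a)).
  assert (HPa : 0 < Pa) by (unfold Pa, Rpower; apply Rmult_lt_0_compat; apply exp_pos).
  assert (HB : 0 < B) by apply exp_pos.
  assert (Ha3 : 0 < a^3) by (apply pow_lt; lra).
  assert (HK : 0 <= K) by (unfold K; apply Rmult_le_pos; [lra | left; apply Rinv_0_lt_compat; lra]).
  assert (Hmain : main_term lam r a = Pa / g).
  { unfold main_term. rewrite (is_derive_unique _ _ _ (G_deriv lam a)). fold g. unfold Pa. field. lra. }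
  assert (Hphia : phi lam r a = Pa / g).
  { unfold phi. fold g. unfold Pa. field. lra. }
  assert (Hh0 : forall y, 0 <= h y) by (intros; apply h_nonneg).
  assert (Hcont : forall z, 0 < z -> continuous h z) by (intros; apply h_cont; auto).
  assert (HFd : forall y, 0 < y -> is_derive (RInt h a) y (h y)).
  { intros y Hy. apply F_deriv; auto; lra. }
  assert (Hex : forall b, a <= b -> ex_RInt h a b).
  { intros b Hb. apply (ex_RInt_continuous (V:=R_CompleteNormedModule)).
    intros z Hz. rewrite Rmin_left in Hz by lra. apply Hcont. lra. }
  assert (HFa : RInt h a a = 0) by apply (RInt_point (V:=R_CompleteNormedModule)).
  assert (Hdpos : forall y, a <= y -> 0 < d lam y).
  { intros y Hy. assert (H := d_lb lam y ltac:(lra) ltac:(lra)). nra. }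
  assert (Hmon : forall b1 b2, a <= b1 -> b1 <= b2 -> RInt h a b1 <= RInt h a b2).
  { intros b1 b2 H1 H2.
    assert (- RInt h a b2 <= - RInt h a b1); [|lra].
    apply (mono (fun x => - RInt h a x) (fun x => - h x)); auto.
    - intros x Hx. apply (is_derive_opp (RInt h a)). apply HFd. lra.
    - intros x _. specialize (Hh0 x). lra. }
  assert (H1 : forall b, a <= b -> (1-K)*RInt h a b + phi lam r b <= phi lam r a).
  { intros b Hb.
    replace (phi lam r a) with ((1-K)*RInt h a a + phi lam r a) by (rewrite HFa; ring).
    apply (mono (fun x => (1-K)*RInt h a x + phi lam r x) (fun x => (1-K)*h x + h x * (q lam r x - 1))); auto.
    - intros x Hx. apply (is_derive_plus (fun x => (1-K)*RInt h a x) (phi lam r)).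
      + apply (is_derive_scal (RInt h a)). apply HFd. lra.
      + apply phi_deriv. lra. apply Hdpos. lra.
    - intros x Hx. assert (Hq := q_bound lam r x a Hr Ha ltac:(lra) Hl).
      apply Rabs_le_between in Hq. fold K in Hq. specialize (Hh0 x). nra. }
  assert (H2 : forall b, a <= b -> phi lam r a <= (1+K)*RInt h a b + phi lam r b).
  { intros b Hb.
    assert (-((1+K)*RInt h a b + phi lam r b) <= -((1+K)*RInt h a a + phi lam r a)); [|rewrite HFa in H; lra].
    apply (mono (fun x => -((1+K)*RInt h a x + phi lam r x)) (fun x => -((1+K)*h x + h x * (q lam r x - 1)))); auto.
    - intros x Hx. apply (is_derive_opp (fun x => (1+K)*RInt h a x + phi lam r x)).
      apply (is_derive_plus (fun x => (1+K)*RInt h a x) (phi lam r)).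
      + apply (is_derive_scal (RInt h a)). apply HFd. lra.
      + apply phi_deriv. lra. apply Hdpos. lra.
    - intros x Hx. assert (Hq := q_bound lam r x a Hr Ha ltac:(lra) Hl).
      apply Rabs_le_between in Hq. fold K in Hq. specialize (Hh0 x). nra. }
  assert (H3 : forall b, a <= b -> RInt h a b <= B * Pa / g).
  { intros b Hb.
    assert (RInt h a b + B*Pa*exp(-g*(b-a))/g <= RInt h a a + B*Pa*exp(-g*(a-a))/g).
    { apply (mono (fun x => RInt h a x + B*Pa*exp(-g*(x-a))/g) (fun x => h x - B*Pa*exp(-g*(x-a)))); auto.
      - intros x Hx. apply (is_derive_plus (RInt h a) (fun x => B*Pa*exp(-g*(x-a))/g)).
        + apply HFd. lra.
        + auto_derive; auto. unfold Rminus. field. lra.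
      - intros x Hx. assert (Hb' := h_bound lam r a x Hr Ha ltac:(lra) Hl).
        fold h B g in Hb'. fold Pa in Hb'. lra. }
    rewrite HFa in H. replace (a - a) with 0 in H by ring.
    rewrite Rmult_0_r, exp_0 in H.
    assert (0 <= B*Pa*exp(-g*(b-a))/g).
    { apply Rmult_le_pos; [| left; apply Rinv_0_lt_compat; lra].
      apply Rmult_le_pos; [nra | left; apply exp_pos]. }
    unfold Rdiv in *. lra. }
  assert (Hphi0 : forall b, a <= b -> 0 <= phi lam r b).
  { intros b Hb. unfold phi, Rpower. specialize (Hdpos b Hb).
    apply Rmult_le_pos; [apply Rmult_le_pos|]; [left; apply exp_pos | left; apply Rinv_0_lt_compat; lra | left; apply exp_pos]. }
  assert (H4 : forall eps, 0 < eps -> exists b, a <= b /\ phi lam r b < eps).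
  { intros eps He.
    set (c := 72/7*B*Pa).
    assert (Hc : 0 < c) by (unfold c; nra).
    exists (a + c/(g*eps)).
    set (b := a + c/(g*eps)).
    assert (Hx : g*(b-a) = c/eps) by (unfold b; field; lra).
    assert (Hcg : 0 <= c/(g*eps)).
    { left. apply Rdiv_lt_0_compat; nra. }
    assert (Hb : a <= b) by (unfold b; lra).
    split; auto.
    assert (Hphid : phi lam r b * d lam b = h b).
    { unfold phi, h, integrand. specialize (Hdpos b Hb). field. lra. }
    assert (Hdb := d_lb lam b ltac:(lra) ltac:(lra)).
    assert (Hb2 : 7/72 <= d lam b) by nra.
    assert (Hhb := h_bound lam r a b Hr Ha Hb Hl). fold h B g Pa in Hhb.
    assert (Hexp : exp (- g*(b-a)) * (1 + c/eps) <= 1).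
    { rewrite <- Hx. assert (He1 := exp_ineq1_le (g*(b-a))).
      replace (- g * (b-a)) with (- (g*(b-a))) by ring.
      rewrite exp_Ropp. assert (0 < exp (g*(b-a))) by apply exp_pos.
      apply Rmult_le_reg_l with (exp (g*(b-a))); auto.
      rewrite <- Rmult_assoc, Rinv_r by lra. lra. }
    assert (Hp0 := Hphi0 b Hb).
    assert (phi lam r b * (7/72) <= B * Pa * exp (- g*(b-a))) by nra.
    assert (Hce : c / eps * eps = c) by (field; lra).
    assert (0 < exp (- g*(b-a))) by apply exp_pos.
    assert (phi lam r b <= c * exp (- g*(b-a))) by (unfold c; nra).
    assert (c * exp (- g*(b-a)) < eps).
    { assert (c * exp (- g*(b-a)) * (1 + c/eps) <= c) by nra.
      assert (0 < c/eps) by (apply Rdiv_lt_0_compat; lra).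
      nra. }
    lra. }
  set (E := fun x => exists b, a <= b /\ x = RInt h a b).
  assert (HEb : bound E).
  { exists (B*Pa/g). intros x [b [Hb ->]]. apply H3; auto. }
  assert (HEn : exists x, E x) by (exists 0; exists a; split; [lra | auto]).
  destruct (completeness E HEb HEn) as [I HI].
  assert (HIub : forall b, a <= b -> RInt h a b <= I).
  { intros b Hb. apply (proj1 HI). exists b; auto. }
  assert (HI0 : 0 <= I) by (rewrite <- HFa; apply HIub; lra).
  assert (HIB : I <= B*Pa/g).
  { apply (proj2 HI). intros x [b [Hb ->]]. apply H3; auto. }
  exists I. split.
  - apply gen_of_lub; auto.
  - rewrite Hmain.
    assert (Hup : I - Pa/g <= K*I).
    { apply le_eps. intros eps He.
      destruct (lub_approx (RInt h a) a I eps He HI) as [b [Hb Hb']].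
      specialize (H1 b Hb). specialize (Hphi0 b Hb). specialize (HIub b Hb).
      assert (K * RInt h a b <= K * I) by (apply Rmult_le_compat_l; auto).
      lra. }
    assert (Hlo : Pa/g - I <= K*I).
    { apply le_eps. intros eps He.
      destruct (H4 eps He) as [b [Hb Hb']].
      specialize (H2 b Hb). specialize (HIub b Hb).
      assert ((1+K) * RInt h a b <= (1+K) * I) by (apply Rmult_le_compat_l; lra).
      lra. }
    assert (HM : 0 < Pa/g) by (apply Rdiv_lt_0_compat; lra).
    rewrite (Rabs_pos_eq (Pa/g)) by lra.
    assert (Rabs (I - Pa/g) <= K*I) by (apply Rabs_le; lra).
    assert (K*I <= K*(B*Pa/g)) by (apply Rmult_le_compat_l; auto).
    replace ((11 * r + 144) * B * (Pa / g) * / a ^ 3) with (K*(B*Pa/g))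
      by (unfold K, B; field; split; lra).
    lra.
Qed.
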